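(* Let $\mathbf{F}=(F_1,\ldots,F_d)$ be a vector of finite simple graphs, each with at most $n$ vertices, and let $e_i$ be the number of edges of $F_i$. Then the spine $\{ (p^{e_1}, p^{e_2}, \ldots, p^{e_d} ) \mid 0\leq p \leq 1 \}$ is contained in $P_{\mathbf{F};n}$ (with the convention $0^0=1$).
   Context: For graphs $F,G$, $t^L(F,G)$ is the number of subgraphs of $G$ (not necessarily induced) isomorphic to $F$, and $t(F,G)=t^L(F,G)/t^L(F,K_{|G|})$ if $|F|\le|G|$ and $t(F,G)=0$ otherwise, where $|H|$ is the number of vertices of $H$ and $K_N$ the complete graph on $N$ vertices. Write $t(\mathbf{F},G)=(t(F_1,G),\ldots,t(F_d,G))$. The polytope from subgraph statistics is $P_{\mathbf{F};n}=\mathrm{conv}\{t(\mathbf{F},G)\mid G \text{ a graph on } n \text{ vertices}\}\subseteq\mathbb{R}^d$. *)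

(* Defs.v *)
From HB Require Import structures.
From mathcomp Require Import all_boot all_order all_algebra.
Set Implicit Arguments.
Unset Strict Implicit.
Unset Printing Implicit Defensive.
Import Order.TTheory GRing.Theory Num.Theory.
Local Open Scope ring_scope.

Record sgraph := SGraph {
  nv : nat;
  edges : {set {set 'I_nv}};
  edgesP : forall e, e \in edges -> #|e| = 2%N }.

Definition ne (F : sgraph) : nat := #|edges F|.

Definition Kedges (N : nat) : {set {set 'I_N}} := [set e : {set 'I_N} | #|e| == 2%N].

Definition iso_copy (F : sgraph) (N : nat)
    (V' : {set 'I_N}) (E' : {set {set 'I_N}}) : bool :=
  [exists f : {ffun 'I_(nv F) -> 'I_N},
     [&& injectiveb f, f @: setT == V' & [set (f @: e) | e : {set 'I_(nv F)} in edges F] == E']].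

(* t^L(F,G) for a graph G on 'I_N with edge set EG: the number of
   (not necessarily induced) subgraphs (V',E') of G isomorphic to F. *)
Definition tL (F : sgraph) (N : nat) (EG : {set {set 'I_N}}) : nat :=
  #|[set p : {set 'I_N} * {set {set 'I_N}} |
       (p.2 \subset EG) && iso_copy F p.1 p.2]|.

Definition tdens (R : realFieldType) (F : sgraph) (G : sgraph) : R :=
  if (nv F <= nv G)%N
  then (tL F (edges G))%:R / (tL F (Kedges (nv G)))%:R
  else 0.

Definition tvec (R : realFieldType) (d : nat) (F : 'I_d -> sgraph) (G : sgraph)
  : 'rV[R]_d := \row_i tdens R (F i) G.

Definition in_conv (R : realFieldType) (d : nat) (P : 'rV[R]_d -> Prop)
    (x : 'rV[R]_d) : Prop :=
  exists (m : nat) (w : 'I_m -> R) (y : 'I_m -> 'rV[R]_d),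
    [/\ forall j, 0 <= w j, \sum_j w j = 1, forall j, P (y j)
      & x = \sum_j w j *: y j].

Definition in_polytope (R : realFieldType) (d : nat) (F : 'I_d -> sgraph)
    (n : nat) (x : 'rV[R]_d) : Prop :=
  in_conv (fun y => exists G : sgraph, nv G = n /\ y = tvec R F G) x.

(* Main.v *)
Require Import Defs.
From HB Require Import structures.
From mathcomp Require Import all_boot all_order all_algebra.
Import Order.TTheory GRing.Theory Num.Theory.
Local Open Scope ring_scope.

Lemma conv_fin (R : realFieldType) (d : nat) (P : 'rV[R]_d -> Prop) (T : finType)
  (w : T -> R) (y : T -> 'rV[R]_d) :
  (forall t, 0 <= w t) -> \sum_t w t = 1 -> (forall t, P (y t)) ->
  in_conv P (\sum_t w t *: y t).
Proof.
move=> w0 w1 Py.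
exists #|[set: T]|, (fun j => w (enum_val j)), (fun j => y (enum_val j)).
split => //.
- by rewrite -(big_enum_val (A := mem [set: T]) (fun t => w t)) /= -w1; apply: eq_bigl => t; rewrite inE.
- by rewrite -(big_enum_val (A := mem [set: T]) (fun t => w t *: y t)) /=; apply: eq_bigl => t; rewrite inE.
Qed.

Section S.
Variables (R : realFieldType) (n : nat) (p : R).

Definition Eg (g : {ffun {set 'I_n} -> bool}) : {set {set 'I_n}} :=
  [set e in Kedges n | g e].

Lemma EgP g e : e \in Eg g -> #|e| = 2%N.
Proof. by rewrite !inE => /andP[/eqP]. Qed.

Lemma Eg_sub g : Eg g \subset Kedges n.
Proof. by apply/subsetP => e; rewrite inE => /andP[]. Qed.

Definition Gg g := SGraph (@EgP g).

Definition q (e : {set 'I_n}) (b : bool) : R :=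
  if #|e| == 2%N then (if b then p else 1 - p) else (if b then 0 else 1).

Definition w (g : {ffun {set 'I_n} -> bool}) : R := \prod_e q e (g e).

Lemma w_ge0 g : 0 <= p -> p <= 1 -> 0 <= w g.
Proof.
move=> h0 h1; apply: prodr_ge0 => e _; rewrite /q.
by case: ifP; case: (g e) => //; rewrite ?subr_ge0 ?ler01.
Qed.

Lemma sum_w_sub (E : {set {set 'I_n}}) : E \subset Kedges n ->
  \sum_g w g * (E \subset Eg g)%:R = p ^+ #|E|.
Proof.
move=> EK.
have ind g : (E \subset Eg g)%:R =
   \prod_e (if e \in E then (g e)%:R else 1) :> R.
  case: (boolP (E \subset Eg g)) => [sub|/subsetPn[e eE neg]].
    rewrite big1 // => e _; case: ifP => // eE.
    by have := subsetP sub e eE; rewrite inE => /andP[_ ->].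
  rewrite (bigD1 e) //= eE; move: neg; rewrite inE (subsetP EK e eE) /=.
  by move/negbTE ->; rewrite mul0r.
under eq_bigr do rewrite ind /w -big_split /=.
rewrite -(bigA_distr_bigA (fun e (b : bool) => q e b * (if e \in E then b%:R else 1))).
rewrite -prodr_const [RHS]big_mkcond /=; apply: eq_bigr => e _.
rewrite big_bool /q /=; case: (boolP (e \in E)) => eE.
  by move: (subsetP EK e eE); rewrite inE => ->; rewrite mulr1 mulr0 addr0.
by case: ifP => _; rewrite !mulr1 ?add0r // addrC subrK.
Qed.

Lemma sum_w : \sum_g w g = 1.
Proof.
have := @sum_w_sub set0 (sub0set _); rewrite cards0 expr0 => <-.
by apply: eq_bigr => g _; rewrite sub0set mulr1.
Qed.

End S.

Lemma iso_card (F : sgraph) N V E : iso_copy F V E ->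
  E \subset Kedges N /\ #|E| = ne F.
Proof.
move=> /existsP[f /and3P[/injectiveP fi _ /eqP <-]]; split.
  apply/subsetP => x /imsetP[e eF ->]; rewrite inE card_imset //.
  by rewrite (edgesP eF).
by rewrite card_imset //; apply: imset_inj.
Qed.

Lemma tL_sum (R : realFieldType) (F : sgraph) N (EG : {set {set 'I_N}}) :
  EG \subset Kedges N ->
  (tL F EG)%:R = \sum_(c | iso_copy F c.1 c.2) (c.2 \subset EG)%:R :> R.
Proof.
move=> EGK; rewrite /tL -sum1_card natr_sum [LHS]big_mkcond [RHS]big_mkcond /=.
apply: eq_bigr => c _.
rewrite inE; case: (iso_copy F c.1 c.2); last by rewrite andbF.
by rewrite andbT; case: (c.2 \subset EG).
Qed.

Lemma tL_pos (R : realFieldType) (F : sgraph) N : (nv F <= N)%N ->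
  (0 < tL F (Kedges N))%N.
Proof.
move=> le; rewrite /tL card_gt0; apply/set0Pn.
pose f := [ffun i => widen_ord le i].
exists (f @: setT, [set (f @: e) | e : {set 'I_(nv F)} in edges F]).
have ic : iso_copy F (f @: setT) [set (f @: e) | e : {set 'I_(nv F)} in edges F].
  apply/existsP; exists f; rewrite !eqxx !andbT /=; apply/injectiveP => i j.
  by rewrite /f !ffunE => /(congr1 val) /= h; apply/val_inj.
by rewrite inE ic andbT; case: (@iso_card _ _ _ _ ic).
Qed.

Theorem proposition3p1 (R : realFieldType) (d n : nat) (F : 'I_d -> sgraph)
  (hF : forall i, (nv (F i) <= n)%N) (p : R) (hp0 : 0 <= p) (hp1 : p <= 1) :
  in_polytope F n (\row_i p ^+ ne (F i)).
Proof.
have -> : (\row_i p ^+ ne (F i)) =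
   \sum_(g : {ffun {set 'I_n} -> bool}) @w R n p g *: tvec R F (@Gg n g).
  apply/rowP => i; rewrite !mxE summxE.
  under eq_bigr do rewrite !mxE /tdens /= hF.
  have T0 : (tL (F i) (Kedges n))%:R != 0 :> R by rewrite pnatr_eq0 -lt0n tL_pos.
  under eq_bigr => g _ do rewrite (@tL_sum R (F i) n _ (@Eg_sub n g)).
  apply: (mulIf T0).
  rewrite mulr_suml; under eq_bigr => g _ do rewrite mulrA divfK // mulr_sumr.
  rewrite exchange_big /=.
  rewrite (@tL_sum R (F i) n _ (subxx (Kedges n))) mulr_sumr.
  apply: eq_bigr => c ic.
  have [cK cc] := @iso_card _ _ _ _ ic.
  by rewrite cK mulr1 -cc sum_w_sub.
apply: conv_fin.
- by move=> g; apply: w_ge0.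
- exact: sum_w.
- by move=> g; exists (@Gg n g).
Qed.
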